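(* Let $(H,k,\chi)$ be an instance of Precoloring Extension with $H=(\{1,\dots,n\},F)$ having at least one edge and $\chi:V_0\to\{1,\dots,k\}$. Let $X=nk+1$; let $u_j=\chi(j)$, $\ell_j=\chi(j)$ for $j\in V_0$ and $u_j=k$, $\ell_j=1$ for $j\notin V_0$. Construct a $P_n\,|\,\mathrm{conc}\,|\,\sum C_j$ instance: jobs $1,\dots,n$ with $p_j=1$ and conflict graph initially $H$; for each $j\in\{1,\dots,n\}$, jobs $j(1),\dots,j(X)$ with processing time $X-u_j$, each in conflict with $j$, and for each $i\in\{1,\dots,X\}$ jobs $j(i,1),\dots,j(i,X)$ with processing time $u_j$, each in conflict with $j(i)$; for each $j\in V_0$ with $\chi(j)>1$, jobs $j^*(1),\dots,j^*(X)$ with processing time $\ell_j-1$, each in conflict with $j$ only. Let $K=\sum_{j=1}^n\big[(1+u_j)X^2+(\ell_j-1)X\big]+nk$. If the constructed instance has a minimal feasible schedule $C$ with $\sum_j C_j\le K$, then $(H,k,\chi)$ has a solution $\chi':\{1,\dots,n\}\to\{1,\dots,k\}$.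
   Context: Precoloring Extension: given a graph $H=(V,F)$, an integer $k$, and a proper coloring $\chi:V_0\to\{1,\dots,k\}$ of $H[V_0]$ for some $V_0\subseteq V$, a solution is a proper coloring $\chi':V\to\{1,\dots,k\}$ of $H$ with $\chi'(v)=\chi(v)$ for all $v\in V_0$. In $P_n\,|\,\mathrm{conc}\,|\,\sum C_j$, each job $j$ has integer processing time $p_j\ge1$ and release time $0$, and there is a conflict graph $G$ (the edges listed); a schedule assigning completion times $C_j\in\mathbb{N}$ is feasible if $C_j-p_j\ge0$ for all $j$ and $[C_i-p_i,C_i)\cap[C_j-p_j,C_j)=\emptyset$ for all conflicting pairs $\{i,j\}$; $\sum_j C_j$ is over all jobs. A feasible schedule is minimal if decreasing the completion time of any job by any positive amount makes it infeasible. *)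

(* Defs.v *)
From mathcomp Require Import all_boot.
Set Implicit Arguments. Unset Strict Implicit. Unset Printing Implicit Defensive.

(* Graph H on vertex set 'I_n (vertex v : 'I_n stands for vertex v+1 of the paper),
   given by a symmetric irreflexive relation e. Colours are naturals in 1..k. *)

Definition simple_graph n (e : rel 'I_n) : Prop := symmetric e /\ irreflexive e.

(* chi : V0 -> {1..k} is a proper colouring of H[V0] (values outside V0 ignored) *)
Definition precoloring n (k : nat) (e : rel 'I_n) (V0 : {set 'I_n})
    (chi : 'I_n -> nat) : Prop :=
  (forall v, v \in V0 -> 1 <= chi v <= k) /\
  (forall v w, v \in V0 -> w \in V0 -> e v w -> chi v != chi w).

Definition pe_solution n (k : nat) (e : rel 'I_n) (V0 : {set 'I_n})
    (chi chi' : 'I_n -> nat) : Prop :=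
  (forall v, 1 <= chi' v <= k) /\
  (forall v w, e v w -> chi' v != chi' w) /\
  (forall v, v \in V0 -> chi' v = chi v).

Section Construction.
Variables (n k : nat) (e : rel 'I_n) (V0 : {set 'I_n}) (chi : 'I_n -> nat).

Definition X := n * k + 1.
Definition uu (j : 'I_n) := if j \in V0 then chi j else k.
Definition ll (j : 'I_n) := if j \in V0 then chi j else 1.
Definition has_star (j : 'I_n) := (j \in V0) && (1 < chi j).

(* Jobs: Base j = job j;  Aux j i = j(i+1);  Aux2 j i i' = j(i+1,i'+1);
   Star j i = j^*(i+1).  Indices i, i' range over 0..X-1 (see is_job). *)
Inductive job :=
| Base of 'I_n
| Aux of 'I_n & nat
| Aux2 of 'I_n & nat & nat
| Star of 'I_n & nat.

Definition is_job (a : job) : bool :=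
  match a with
  | Base _ => true
  | Aux _ i => i < X
  | Aux2 _ i i' => (i < X) && (i' < X)
  | Star j i => has_star j && (i < X)
  end.

Definition ptime (a : job) : nat :=
  match a with
  | Base _ => 1
  | Aux j _ => X - uu j
  | Aux2 j _ _ => uu j
  | Star j _ => ll j - 1
  end.

Definition conflict0 (a b : job) : bool :=
  match a, b with
  | Base i, Base j => e i j
  | Base j, Aux j' _ => j == j'
  | Aux j i, Aux2 j' i' _ => (j == j') && (i == i')
  | Base j, Star j' _ => j == j'
  | _, _ => false
  end.

Definition conflict (a b : job) : bool := conflict0 a b || conflict0 b a.

(* completion times C : job -> nat; only values at actual jobs matter *)
Definition feasible (C : job -> nat) : Prop :=
  (forall a, is_job a -> ptime a <= C a) /\
  (forall a b, is_job a -> is_job b -> conflict a b ->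
     forall t, ~ ((C a - ptime a <= t < C a) /\ (C b - ptime b <= t < C b))).

(* Decreasing C a by d > 0 (with d <= C a, so that it stays in N) breaks feasibility. *)
Definition minimal_schedule (C : job -> nat) : Prop :=
  feasible C /\
  forall a, is_job a -> forall d, 0 < d <= C a ->
  forall C' : job -> nat, C' a = C a - d ->
    (forall b, is_job b -> b <> a -> C' b = C b) -> ~ feasible C'.

Definition total_completion (C : job -> nat) : nat :=
  \sum_(j < n)
     (C (Base j)
      + \sum_(i < X) (C (Aux j i) + \sum_(i' < X) C (Aux2 j i i'))
      + \sum_(i < X | has_star j) C (Star j i)).

Definition bound_K : nat :=
  \sum_(j < n) ((1 + uu j) * X ^ 2 + (ll j - 1) * X) + n * k.

End Construction.

(* Main.v *)
Require Import Defs.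
From mathcomp Require Import all_boot zify.

Lemma disj (s1 c1 s2 c2 : nat) : s1 < c1 -> s2 < c2 ->
  (forall t, ~ ((s1 <= t < c1) /\ (s2 <= t < c2))) -> c1 <= s2 \/ c2 <= s1.
Proof.
move=> h1 h2 H; case: (leqP c1 s2) => [|a]; first by left.
case: (leqP c2 s1) => [|b]; first by right.
exfalso; apply: (H (maxn s1 s2)); split; apply/andP; split; lia.
Qed.

Lemma sum_ge (m : nat) (cs : 'I_m -> nat) (q : nat) :
  (forall i, q <= cs i) -> m * q <= \sum_(i < m) cs i.
Proof.
move=> H; have : \sum_(i < m) q <= \sum_(i < m) cs i by apply: leq_sum => i _; apply: H.
by rewrite sum_nat_const card_ord.
Qed.

Lemma group_bound (X u b c : nat) (cs : 'I_X -> nat) :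
  u < X -> 1 <= b -> X - u <= c -> (forall i, u <= cs i) ->
  (0 < u -> forall i, c <= cs i - u \/ cs i <= c - (X - u)) ->
  (c <= b - 1 \/ b <= c - (X - u)) ->
  X * (1 + u) + ((u < b) && (b <= X)) <= c + \sum_(i < X) cs i.
Proof.
move=> uX b1 cX csu Hd Hb.
case: (leqP X c) => cX'.
  have S := @sum_ge X cs u csu.
  case E: ((u < b) && (b <= X)); last by rewrite addn0 mulnDr muln1; lia.
  move/andP: E => [E1 E2].
  have : X < c by case: Hb; lia.
  move=> ?; rewrite mulnDr muln1 /=. clear Hd Hb csu. set s := \sum_(i < X) cs i in S *. lia.
have u0 : 0 < u by lia.
have S : X * X <= \sum_(i < X) cs i.
  apply: sum_ge => i; have := csu i; case: (Hd u0 i); lia.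
have : X * u + X <= X * X by rewrite addnC -mulnS; apply: leq_mul.
set s := \sum_(i < X) cs i in S *.
case: ((u < b) && (b <= X)); rewrite mulnDr muln1 /=; lia.
Qed.

Lemma star_bound (X q b : nat) (cs : 'I_X -> nat) : 0 < q -> 1 <= b ->
  (forall i, q <= cs i) -> (forall i, cs i <= b - 1 \/ b <= cs i - q) ->
  X * (q + (b <= q)) <= \sum_(i < X) cs i.
Proof.
move=> q0 b1 H1 H2; apply: sum_ge => i; have := H1 i; case: (H2 i);
case: (leqP b q); simpl; lia.
Qed.

Theorem lemma14 (n k : nat) (e : rel 'I_n) (V0 : {set 'I_n}) (chi : 'I_n -> nat) :
  simple_graph e ->
  (exists v w, e v w) ->
  precoloring k e V0 chi ->
  (exists C : job n -> nat,
      minimal_schedule k e V0 chi C /\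
      total_completion k V0 chi C <= bound_K k V0 chi) ->
  exists chi' : 'I_n -> nat, pe_solution k e V0 chi chi'.
Proof.
move=> _ _ [Hchi1 Hchi2] [C [[[Hp Hc] _] Htot]].
have D : forall a b, is_job k V0 chi a -> is_job k V0 chi b -> conflict e a b ->
    0 < ptime k V0 chi a -> 0 < ptime k V0 chi b ->
    C a <= C b - ptime k V0 chi b \/ C b <= C a - ptime k V0 chi a.
  move=> a b ja jb cab pa pb; apply: disj; last exact: (Hc a b ja jb cab).
    by have := Hp a ja; lia.
  by have := Hp b jb; lia.
have uk : forall j, uu k V0 chi j <= k.
  by move=> j; rewrite /uu; case: ifP => // /Hchi1; lia.
have l1 : forall j, 1 <= ll V0 chi j.
  by move=> j; rewrite /ll; case: ifP => // /Hchi1; lia.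
have uX : forall j : 'I_n, uu k V0 chi j < X n k.
  move=> j; have := uk j; have : 0 < n by case: j => /= m; lia.
  rewrite /X; nia.
have b1 : forall j, 1 <= C (Base j).
  by move=> j; exact: (Hp (Base j)).
pose viol j := (C (Base j) < ll V0 chi j) || (uu k V0 chi j < C (Base j)).
pose A j := (1 + uu k V0 chi j) * X n k ^ 2 + (ll V0 chi j - 1) * X n k.
have Tj : forall j, A j + (1 + viol j * X n k) <=
    C (Base j)
      + \sum_(i < X n k) (C (Aux j i) + \sum_(i' < X n k) C (Aux2 j i i'))
      + \sum_(i < X n k | has_star V0 chi j) C (Star j i).
  move=> j.
  set b := C (Base j); set u := uu k V0 chi j; set l := ll V0 chi j; set XX := X n k.
  have hb : 1 <= b by apply: b1.
  have huX : u < XX by apply: uX.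
  pose g := (u < b) && (b <= XX).
  have HG : XX * (XX * (1 + u) + g) <=
      \sum_(i < XX) (C (Aux j i) + \sum_(i' < XX) C (Aux2 j i i')).
    apply: sum_ge => i.
    apply: group_bound => //.
    - exact: (Hp (Aux j i) (ltn_ord i)).
    - move=> i'; exact: (Hp (Aux2 j i i') (andb_true_intro (conj (ltn_ord i) (ltn_ord i')))).
    - move=> u0 i'; apply: (D (Aux j i) (Aux2 j i i')) => //=.
      + by rewrite (ltn_ord i) (ltn_ord i').
      + by rewrite /conflict /= !eqxx.
      + rewrite /u in huX; lia.
    - have := D (Base j) (Aux j i) isT (ltn_ord i).
      rewrite /conflict /= eqxx /= => /(_ isT isT).
      have : 0 < XX - u by lia.
      move=> h /(_ h) /=; rewrite -/b -/XX -/u; lia.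
  pose q := l - 1.
  pose s := b <= q.
  have HS : XX * (q + s) <= \sum_(i < XX | has_star V0 chi j) C (Star j i).
    case hs: (has_star V0 chi j).
      move: (hs); rewrite /has_star => /andP [jV cj].
      have q0 : 0 < q by rewrite /q /l /ll jV; lia.
      apply: star_bound => // i.
      + exact: (Hp (Star j i) (andb_true_intro (conj hs (ltn_ord i)))).
      + have := D (Base j) (Star j i) isT (andb_true_intro (conj hs (ltn_ord i))).
        rewrite /conflict /= eqxx /= => /(_ isT isT).
        move=> /(_ q0) /=; rewrite -/b /q /l; lia.
    rewrite big_pred0 //.
    have : l <= 1.
      move: hs; rewrite /has_star /l /ll; case: ifP => //= jV.
      by rewrite ltnNge => /negbFE.
    rewrite /s /q; move=> hl; have -> : l - 1 = 0 by lia.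
    by rewrite (leqNgt b 0) hb muln0.
  set G := \sum_(i < XX) _ in HG *.
  set S := \sum_(i < XX | _) _ in HS *.
  have V : viol j -> s || g || (XX < b).
    by rewrite /viol /s /g /q -/b -/l -/u; have := l1 j; rewrite -/l; lia.
  rewrite /A -/u -/l -/XX -/q.
  have E1 : XX * (XX * (1 + u) + g) = (1 + u) * XX ^ 2 + XX * g.
    by rewrite mulnDr mulnA mulnn (mulnC (XX ^ 2)).
  have E2 : XX * (q + s) = q * XX + XX * s by rewrite mulnDr mulnC.
  rewrite E1 in HG; rewrite E2 in HS.
  move: V HG HS; set P := (1 + u) * XX ^ 2; set Q := q * XX.
  clear E1 E2; clearbody s g; case: (viol j); case: s; case: g => /=; lia.
have nv : forall j, ~~ viol j.
  move=> j0; apply/negP => vj0.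
  have S1 : \sum_(j < n) (A j + (1 + viol j * X n k)) <= total_completion k V0 chi C.
    by apply: leq_sum => j _; apply: Tj.
  rewrite big_split /= in S1.
  have S2 : 1 + X n k <= \sum_(j < n) (1 + viol j * X n k).
    rewrite (bigD1 j0) //= vj0 mul1n; exact: leq_addr.
  move: Htot; rewrite /bound_K -/(A _).
  have -> : \sum_(j < n) ((1 + uu k V0 chi j) * X n k ^ 2 + (ll V0 chi j - 1) * X n k) = \sum_(j < n) A j by [].
  set sA := \sum_(j < n) A j in S1 *.
  set sF := \sum_(j < n) (1 + viol j * X n k) in S1 S2.
  set T := total_completion k V0 chi C in S1 *.
  rewrite /X in S2; lia.
exists (fun v => C (Base v)); split; [|split].
- move=> v; have := nv v; rewrite /viol negb_or -!leqNgt => /andP [h1 h2].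
  by have := l1 v; have := uk v; lia.
- move=> v w evw; apply/negP => /eqP E.
  have := D (Base v) (Base w) isT isT; rewrite /conflict /= evw /= => /(_ isT isT isT).
  by have := b1 v; lia.
- move=> v vV; have := nv v; rewrite /viol /ll /uu vV negb_or -!leqNgt => /andP [h1 h2].
  lia.
Qed.
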